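(* Let $N=[n]$, let $v:2^N\to\mathbb{R}_+$ be any monotone valuation with $v(\emptyset)=0$, and let $X$ be a maximal decision map for $v$. Then there exists a pure Nash equilibrium $p\in\mathbb{R}^n_+$ of the pricing game defined by $v$ and $X$ with $X(p)=N$.
   Context: Pricing game: $N=[n]$ is a set of services, service $i$ controlled by seller $i$. A buyer has valuation $v:2^N\to\mathbb{R}_+$, monotone ($v(S)\le v(T)$ for $S\subseteq T$) with $v(\emptyset)=0$. For $p\in\mathbb{R}^n_+$, $p(S)=\sum_{j\in S}p_j$ and $D(v;p)=\arg\max_{S\subseteq N}(v(S)-p(S))$. A decision map is $X:\mathbb{R}^n_+\to 2^N$ with $X(p)\in D(v;p)$ for all $p$; it is maximal if for every $p$ there is no $S'\in D(v;p)$ with $X(p)\subsetneq S'$. Seller $i$ chooses a price $p_i\in\mathbb{R}_+$ and has utility $u_i(p)=p_i\cdot\mathbf{1}\{i\in X(p)\}$. A pure Nash equilibrium is a $p$ such that $u_i(p)\ge u_i(p_i',p_{-i})$ for all $i$ and all $p_i'\in\mathbb{R}_+$. *)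

(* Defs.v *)
From mathcomp Require Import all_boot all_order all_algebra.
From mathcomp Require Import reals.
Set Implicit Arguments. Unset Strict Implicit. Unset Printing Implicit Defensive.
Import Order.TTheory GRing.Theory Num.Theory.
Local Open Scope ring_scope.

Section Pricing.
Variables (R : realType) (n : nat).

Definition nonneg_prices (p : 'I_n -> R) : Prop := forall i, 0 <= p i.

Definition price_of (p : 'I_n -> R) (S : {set 'I_n}) : R := \sum_(j in S) p j.

Definition valuation (v : {set 'I_n} -> R) : Prop :=
  [/\ forall S : {set 'I_n}, 0 <= v S,
      forall S T : {set 'I_n}, S \subset T -> v S <= v T
    & v set0 = 0].

Definition in_demand (v : {set 'I_n} -> R) (p : 'I_n -> R) (S : {set 'I_n}) : Prop :=
  forall T : {set 'I_n}, v T - price_of p T <= v S - price_of p S.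

Definition decision_map (v : {set 'I_n} -> R) (X : ('I_n -> R) -> {set 'I_n}) : Prop :=
  forall p, nonneg_prices p -> in_demand v p (X p).

Definition maximal_decision_map (v : {set 'I_n} -> R) (X : ('I_n -> R) -> {set 'I_n}) : Prop :=
  decision_map v X /\
  forall p, nonneg_prices p ->
    forall S' : {set 'I_n}, in_demand v p S' -> ~ (X p \proper S').

Definition upd_price (p : 'I_n -> R) (i : 'I_n) (q : R) : 'I_n -> R :=
  fun j => if j == i then q else p j.

Definition seller_utility (X : ('I_n -> R) -> {set 'I_n}) (p : 'I_n -> R) (i : 'I_n) : R :=
  if i \in X p then p i else 0.

Definition pure_NE (X : ('I_n -> R) -> {set 'I_n}) (p : 'I_n -> R) : Prop :=
  nonneg_prices p /\
  forall (i : 'I_n) (q : R), 0 <= q ->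
    seller_utility X (upd_price p i q) i <= seller_utility X p i.

End Pricing.

(* Main.v *)
Require Import Defs.
From mathcomp Require Import all_boot all_order all_algebra.
From mathcomp Require Import reals.
From mathcomp Require Import lra.
Set Implicit Arguments. Unset Strict Implicit. Unset Printing Implicit Defensive.
Import Order.TTheory GRing.Theory Num.Theory.
Local Open Scope ring_scope.

Section Aux.
Variables (R : realType) (n : nat) (v : {set 'I_n} -> R).

Definition cc (U : {set 'I_n}) : R := v [set: 'I_n] - v (~: U).
Definition feas (p : 'I_n -> R) := forall U, price_of p U <= cc U.
Definition tight (p : 'I_n -> R) (i : 'I_n) :=
  exists U : {set 'I_n}, i \in U /\ price_of p U = cc U.

Lemma price_upd (p : 'I_n -> R) (k : 'I_n) (x : R) (U : {set 'I_n}) :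
  price_of (upd_price p k x) U =
  price_of p U + (if k \in U then x - p k else 0).
Proof.
rewrite /price_of; case: ifP => kU.
  rewrite (bigD1 k) //= (bigD1 k kU) /= /upd_price eqxx.
  rewrite (eq_bigr (fun j => p j)); last by move=> j /andP[_ /negPf ->].
  lra.
rewrite addr0; apply: eq_bigr => j jU; rewrite /upd_price.
by case: eqP => // E; rewrite -E jU in kU.
Qed.

Lemma price_split (p : 'I_n -> R) (T : {set 'I_n}) :
  price_of p [set: 'I_n] = price_of p T + price_of p (~: T).
Proof.
rewrite /price_of (big_setID T) /= setTI setTD; done.
Qed.

Hypothesis hv : valuation v.

Lemma cc_ge0 U : 0 <= cc U.
Proof. case: hv => _ mon _; rewrite /cc subr_ge0; apply: mon; exact: subsetT. Qed.

Lemma build (k : nat) : exists p : 'I_n -> R,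
  [/\ forall j, 0 <= p j, forall j : 'I_n, (k <= j)%N -> p j = 0, feas p
    & forall i : 'I_n, (i < k)%N -> tight p i].
Proof.
elim: k => [|k [p [p0 pz pf pt]]].
  exists (fun _ => 0); split => //.
  move=> U; rewrite /price_of big1 //; exact: cc_ge0.
case: (ltnP k n) => kn; last first.
  exists p; split => //; first by move=> j kj; apply: pz; exact: ltnW.
  move=> i ik; apply: pt; exact: leq_trans (ltn_ord i) kn.
set kk := Ordinal kn.
pose f U := cc U - price_of p U.
have kT : kk \in [set: 'I_n] by rewrite inE.
case: (@arg_minP _ _ _ [set: 'I_n] (fun U : {set 'I_n} => kk \in U) f kT) => U0 kU0 minU.
have f0 : 0 <= f U0 by rewrite /f subr_ge0.
have pk : p kk = 0 by apply: pz.
exists (upd_price p kk (f U0)); split.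
- by move=> j; rewrite /upd_price; case: eqP.
- move=> j kj; rewrite /upd_price; case: eqP => [E|_].
    by move: kj; rewrite E /= ltnn.
  by apply: pz; exact: ltnW.
- move=> U; rewrite price_upd pk subr0; case: ifP => kU; last by rewrite addr0.
  have := minU U kU; rewrite /f => h.
  by rewrite -lerBrDl.
- move=> i; rewrite ltnS leq_eqVlt => /orP[/eqP ik|ik].
    exists U0; split; first by rewrite (_ : i = kk) //; apply: val_inj.
    by rewrite price_upd kU0 pk subr0 /f addrC subrK.
  have [U [iU tU]] := pt i ik.
  exists U; split => //; rewrite price_upd pk subr0; case: ifP => kU; last by rewrite addr0.
  have := minU U kU; rewrite /f tU subrr => h.
  have e0 : f U0 = 0 by apply/eqP; rewrite eq_le h f0.
  by rewrite /f in e0 *; rewrite e0 addr0.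
Qed.

End Aux.

Theorem mainTheorem2 (R : realType) (n : nat)
    (v : {set 'I_n} -> R) (X : ('I_n -> R) -> {set 'I_n}) :
  valuation v -> maximal_decision_map v X ->
  exists p : 'I_n -> R, pure_NE X p /\ X p = [set: 'I_n].
Proof.
move=> hv [dm mx].
have [p [p0 _ pf pt]] := build hv n.
have demN : in_demand v p [set: 'I_n].
  move=> T; rewrite (price_split p T).
  have := pf (~: T); rewrite /cc setCK => h.
  lra.
have XN : X p = [set: 'I_n].
  apply/eqP; apply: contraT => ne.
  by case: (mx p p0 _ demN); rewrite properT.
exists p; split => //; split => // i q q0.
rewrite /seller_utility XN inE.
case: ifP => iX; last exact: p0.
rewrite leNgt; apply/negP => qp.
set p' := upd_price p i q.
have p'0 : nonneg_prices p' by move=> j; rewrite /p' /upd_price; case: eqP.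
have [U [iU tU]] := pt i (ltn_ord i).
have := dm p' p'0 (~: U).
rewrite /p' !price_upd iX inE iU /= addr0.
set S := X _.
have hS := pf (~: S).
rewrite /cc setCK in hS.
move: tU; rewrite /cc => tU.
have eN := price_split p U.
have eS := price_split p S.
have eU := price_split p (~: U). rewrite setCK in eU.
move=> h.
move: h qp hS tU eN eS; rewrite /upd_price eqxx; lra.
Qed.
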